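(* Let $\alpha\in(1,\infty)$, let $p_{Y\mid X}$ be a channel between finite sets $\mathcal X,\mathcal Y$, and for a distribution $p_X$ on $\mathcal X$, a joint distribution $\tilde q_{X,Y}$ on $\mathcal X\times\mathcal Y$ with $X$-marginal $\tilde q_X$, and a reverse channel $r_{X\mid Y}$, define $$\tilde F_\alpha^{\mathrm{LP}}(p_X,\tilde q_{X,Y},r_{X\mid Y}):=\frac{\alpha}{1-\alpha}D(\tilde q_{X,Y}\|\tilde q_Xp_{Y\mid X})+\mathbb E^{\tilde q_{X,Y}}\!\left[\log\frac{r_{X\mid Y}(X\mid Y)}{\tilde q_X(X)}\right]+\frac{\alpha}{1-\alpha}D(\tilde q_X\|p_X).$$ Then: (1) for fixed $(p_X,\tilde q_{X,Y})$, it is maximized over $r_{X\mid Y}$ by $r^*_{X\mid Y}(x\mid y)=\tilde q_{X,Y}(x,y)/\sum_{x'}\tilde q_{X,Y}(x',y)$; (2) for fixed $(\tilde q_{X,Y},r_{X\mid Y})$, it is maximized over $p_X$ by $p_X^*(x)=\sum_y\tilde q_{X,Y}(x,y)$; (3) for fixed $(p_X,r_{X\mid Y})$, it is maximized over $\tilde q_{X,Y}$ by $\tilde q^*_{X,Y}(x,y)=\hat q_X(x)\hat q_{Y\mid X}(y\mid x)$, where $$\hat q_X(x)=\frac{p_X(x)^{\frac{\alpha}{2\alpha-1}}\big(\sum_yp_{Y\mid X}(y\mid x)r_{X\mid Y}(x\mid y)^{1-\frac1\alpha}\big)^{\frac{\alpha}{2\alpha-1}}}{\sum_{x'}p_X(x')^{\frac{\alpha}{2\alpha-1}}\big(\sum_yp_{Y\mid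 X}(y\mid x')r_{X\mid Y}(x'\mid y)^{1-\frac1\alpha}\big)^{\frac{\alpha}{2\alpha-1}}},\qquad \hat q_{Y\mid X}(y\mid x)=\frac{p_{Y\mid X}(y\mid x)r_{X\mid Y}(x\mid y)^{1-\frac1\alpha}}{\sum_{x'}p_{Y\mid X}(y\mid x')r_{X\mid Y}(x'\mid y)^{1-\frac1\alpha}}.$$
   Context: $\log$ is natural and $D$ is the Kullback–Leibler divergence. A reverse channel $r_{X\mid Y}$ is a family $\{r_{X\mid Y}(\cdot\mid y)\}_{y\in\mathcal Y}$ of distributions on $\mathcal X$. *)

(* Defs.v *)
From HB Require Import structures.
From mathcomp Require Import all_boot all_order all_algebra.
From mathcomp Require Import all_classical all_reals.
From mathcomp Require Import ereal exp.
Set Implicit Arguments. Unset Strict Implicit. Unset Printing Implicit Defensive.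
Import Order.TTheory GRing.Theory Num.Theory.
Local Open Scope ring_scope.

Section Defs.
Variables (R : realType) (X Y : finType).

Definition is_dist (T : finType) (f : T -> R) : Prop :=
  (forall t, 0 <= f t) /\ \sum_t f t = 1.

Definition is_channel (W : X -> Y -> R) : Prop := forall x, is_dist (W x).

(* reverse channel r_{X|Y}: r y x = r_{X|Y}(x|y) *)
Definition is_rev_channel (r : Y -> X -> R) : Prop := forall y, is_dist (r y).

Definition is_joint (q : X -> Y -> R) : Prop :=
  (forall x y, 0 <= q x y) /\ \sum_x \sum_y q x y = 1.

Definition margX (q : X -> Y -> R) (x : X) : R := \sum_y q x y.
Definition margY (q : X -> Y -> R) (y : Y) : R := \sum_x q x y.

(* a * log (a / b) with conventions 0 log(0/b) = 0, a log(a/0) = +oo (a > 0) *)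
Definition xlogxy (a b : R) : \bar R :=
  if a == 0 then 0%E else if b == 0 then +oo%E else (a * ln (a / b))%:E.

Definition KL (T : finType) (f g : T -> R) : \bar R :=
  (\sum_t xlogxy (f t) (g t))%E.

(* the summand q * log (r / m) of an expectation, with 0 * log(..) = 0 and
   q * log (0 / m) = -oo for q > 0 *)
Definition qlog (q r m : R) : \bar R :=
  if q == 0 then 0%E else if r == 0 then -oo%E else (q * ln (r / m))%:E.

Definition F_LP (alpha : R) (W : X -> Y -> R)
    (pX : X -> R) (q : X -> Y -> R) (r : Y -> X -> R) : \bar R :=
  let c := alpha / (1 - alpha) in
  let qXY := fun xy : X * Y => q xy.1 xy.2 in
  let qXpYX := fun xy : X * Y => (margX q xy.1 * W xy.1 xy.2)%R in
  (c%:E * KL qXY qXpYX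
   + (\sum_x \sum_y qlog (q x y) (r y x) (margX q x))
   + c%:E * KL (margX q) pX)%E.

Definition gfun (alpha : R) (W : X -> Y -> R) (r : Y -> X -> R) (x : X) : R :=
  \sum_y W x y * r y x `^ (1 - alpha^-1).

Definition qhatX_num (alpha : R) (W : X -> Y -> R) (pX : X -> R)
    (r : Y -> X -> R) (x : X) : R :=
  pX x `^ (alpha / (2 * alpha - 1)) * gfun alpha W r x `^ (alpha / (2 * alpha - 1)).

Definition qhatX_den (alpha : R) (W : X -> Y -> R) (pX : X -> R)
    (r : Y -> X -> R) : R :=
  \sum_x qhatX_num alpha W pX r x.

Definition qhatX (alpha : R) (W : X -> Y -> R) (pX : X -> R)
    (r : Y -> X -> R) (x : X) : R :=
  qhatX_num alpha W pX r x / qhatX_den alpha W pX r.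

Definition qhatYX (alpha : R) (W : X -> Y -> R) (r : Y -> X -> R)
    (x : X) (y : Y) : R :=
  W x y * r y x `^ (1 - alpha^-1) / gfun alpha W r x.

Definition qstar (alpha : R) (W : X -> Y -> R) (pX : X -> R)
    (r : Y -> X -> R) (x : X) (y : Y) : R :=
  qhatX alpha W pX r x * qhatYX alpha W r x y.

End Defs.

(* Main.v *)
Require Import Defs.
From HB Require Import structures.
From mathcomp Require Import all_boot all_order all_algebra.
From mathcomp Require Import all_classical all_reals.
From mathcomp Require Import ereal exp.
From mathcomp Require Import ring lra.
Import Order.TTheory GRing.Theory Num.Theory.
Local Open Scope ring_scope.

Module Helpers.
Set Implicit Arguments. Unset Strict Implicit.


Section H.
Variable R : realType.

Definition rxl (a b : R) : R := if a == 0 then 0 else a * ln (a / b).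
Definition rql (q r m : R) : R := if q == 0 then 0 else q * ln (r / m).

Lemma ln_le_sub1 (x : R) : 0 < x -> ln x <= x - 1.
Proof.
move=> x0; have := expR_ge1Dx (ln x); rewrite lnK ?posrE //.
by rewrite lerBrDl.
Qed.

Lemma gibbs_term (a b : R) : 0 <= a -> 0 <= b -> (a != 0 -> b != 0) ->
  a - b <= rxl a b.
Proof.
move=> a0 b0 ab; rewrite /rxl; case: eqP => [->|/eqP an0].
  by rewrite sub0r oppr_le0.
have bn0 := ab an0.
have ap : 0 < a by rewrite lt_def an0.
have bp : 0 < b by rewrite lt_def bn0.
have := ln_le_sub1 (divr_gt0 bp ap).
have -> : ln (b / a) = - ln (a / b) by rewrite -invf_div lnV ?posrE ?divr_gt0.
move=> h.
have : a * (b / a - 1) >= a * - ln (a / b) by rewrite ler_pM2l.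
rewrite mulrBr mulrCA divff // mulr1 mulr1 mulrN => h2.
by rewrite -lerN2 opprB.
Qed.
End H.
Arguments rxl {R}. Arguments rql {R}.



Section H2.
Variable R : realType.
Implicit Types a b : R.

Lemma xlogxy_fin a b : (a != 0 -> b != 0) -> xlogxy a b = (rxl a b)%:E.
Proof.
move=> h; rewrite /xlogxy /rxl; case: eqP => [//|/eqP a0]; by rewrite (negbTE (h a0)).
Qed.

Lemma xlogxy_inf a b : a != 0 -> b = 0 -> xlogxy a b = +oo%E.
Proof. by rewrite /xlogxy => /negbTE -> ->; rewrite eqxx. Qed.

Lemma xlogxy_nNy a b : xlogxy a b != -oo%E.
Proof. by rewrite /xlogxy; case: ifP => //; case: ifP. Qed.

Lemma qlog_fin (q r m : R) : (q != 0 -> r != 0) -> qlog q r m = (rql q r m)%:E.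
Proof.
move=> h; rewrite /qlog /rql; case: eqP => [//|/eqP a0]; by rewrite (negbTE (h a0)).
Qed.

Lemma qlog_Ny (q r m : R) : q != 0 -> r = 0 -> qlog q r m = -oo%E.
Proof. by rewrite /qlog => /negbTE -> ->; rewrite eqxx. Qed.

Lemma KL_fin (T : finType) (f g : T -> R) :
  (forall t, f t != 0 -> g t != 0) -> KL f g = (\sum_t rxl (f t) (g t))%:E.
Proof.
move=> h; rewrite /KL -sumEFin; apply: eq_bigr => t _; exact: (xlogxy_fin (h t)).
Qed.

Lemma KL_inf (T : finType) (f g : T -> R) t :
  f t != 0 -> g t = 0 -> KL f g = +oo%E.
Proof.
move=> ft gt; apply/eqP; rewrite /KL esum_eqy; last by move=> i _; exact: xlogxy_nNy.
by apply/existsP; exists t; rewrite /= (xlogxy_inf ft gt).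
Qed.

Lemma cmul_inf (c : R) : c < 0 -> (c%:E * +oo = -oo)%E.
Proof. by move=> c0; rewrite mulry ltr0_sg // mulN1e. Qed.

Lemma esumNy (T : finType) (f : T -> \bar R) t : f t = -oo%E -> (\sum_t f t = -oo)%E.
Proof. by move=> ft; apply/eqP; rewrite esum_eqNy; apply/existsP; exists t; rewrite /= ft. Qed.

End H2.



Section H3.
Variables (R : realType) (X Y : finType) (alpha : R) (W : X -> Y -> R).
Hypothesis halpha : 1 < alpha.
Let c := alpha / (1 - alpha).

Lemma c_lt0 : c < 0.
Proof.
rewrite /c pmulr_rlt0 ?invr_lt0 ?subr_lt0 //; exact: lt_trans ltr01 halpha.
Qed.

Lemma marg_ge (q : X -> Y -> R) x y : (forall x y, 0 <= q x y) -> q x y <= margX q x.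
Proof.
move=> q0; rewrite /margX (bigD1 y) //= lerDl sumr_ge0 // => i _; exact: q0.
Qed.

Lemma margY_ge (q : X -> Y -> R) x y : (forall x y, 0 <= q x y) -> q x y <= margY q y.
Proof.
move=> q0; rewrite /margY (bigD1 x) //= lerDl sumr_ge0 // => i _; exact: q0.
Qed.

Lemma neq0_pos {a : R} : 0 <= a -> a != 0 -> 0 < a.
Proof. by move=> a0 an0; rewrite lt_def an0. Qed.

Lemma T1_fin (q : X -> Y -> R) : (forall x y, 0 <= q x y) ->
  (forall x y, q x y != 0 -> W x y != 0) ->
  KL (fun xy : X * Y => q xy.1 xy.2) (fun xy : X * Y => margX q xy.1 * W xy.1 xy.2)
  = (\sum_x \sum_y rxl (q x y) (margX q x * W x y))%:E.
Proof.
move=> q0 hW; rewrite KL_fin; last first.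
  move=> [x y] /= qn0; rewrite mulf_neq0 ?hW //.
  by rewrite gt_eqF // (lt_le_trans (neq0_pos (q0 x y) qn0)) // marg_ge.
by rewrite pair_bigA.
Qed.

Lemma T2_fin (q : X -> Y -> R) (r : Y -> X -> R) :
  (forall x y, q x y != 0 -> r y x != 0) ->
  (\sum_x \sum_y qlog (q x y) (r y x) (margX q x))%E
  = (\sum_x \sum_y rql (q x y) (r y x) (margX q x))%:E.
Proof.
move=> h; rewrite -sumEFin; apply: eq_bigr => x _; rewrite -sumEFin.
apply: eq_bigr => y _; exact: (qlog_fin _ (h x y)).
Qed.

Lemma F_fin pX (q : X -> Y -> R) (r : Y -> X -> R) : (forall x y, 0 <= q x y) ->
  (forall x y, q x y != 0 -> W x y != 0) ->
  (forall x y, q x y != 0 -> r y x != 0) ->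
  (forall x, margX q x != 0 -> pX x != 0) ->
  F_LP alpha W pX q r = (c * (\sum_x \sum_y rxl (q x y) (margX q x * W x y))
     + (\sum_x \sum_y rql (q x y) (r y x) (margX q x))
     + c * (\sum_x rxl (margX q x) (pX x)))%:E.
Proof.
move=> q0 h1 h2 h3; rewrite /F_LP T1_fin // T2_fin // KL_fin //.
Qed.

Lemma F_bad pX (q : X -> Y -> R) (r : Y -> X -> R) : (forall x y, 0 <= q x y) ->
  ~ ((forall x y, q x y != 0 -> W x y != 0) /\
     (forall x y, q x y != 0 -> r y x != 0) /\
     (forall x, margX q x != 0 -> pX x != 0)) ->
  F_LP alpha W pX q r = -oo%E.
Proof.
move=> q0 nh; rewrite /F_LP.
have [h1|] := pselect (forall x y, q x y != 0 -> W x y != 0); last first.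
  move=> /existsNP [x] /existsNP [y] /not_implyP [qn0 /negP/negbNE/eqP W0].
  rewrite (@KL_inf _ _ _ _ (x, y)) //= ?W0 ?mulr0 // cmul_inf ?c_lt0 //.
have [h2|] := pselect (forall x y, q x y != 0 -> r y x != 0); last first.
  move=> /existsNP [x] /existsNP [y] /not_implyP [qn0 /negP/negbNE/eqP r0].
  rewrite (@esumNy _ _ _ x) ?addNye ?addeNy //.
  by rewrite (@esumNy _ _ _ y) // (qlog_Ny _ qn0 r0).
have [h3|] := pselect (forall x, margX q x != 0 -> pX x != 0); last first.
  move=> /existsNP [x] /not_implyP [qn0 /negP/negbNE/eqP p0].
  by rewrite (@KL_inf _ _ _ _ x) // cmul_inf ?c_lt0 // addeNy.
by exfalso; apply: nh.
Qed.

End H3.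



Section H4.
Variables (R : realType) (X Y : finType).

Lemma lnDv (a b : R) : 0 < a -> 0 < b -> ln (a / b) = ln a - ln b.
Proof. by move=> a0 b0; rewrite ln_div ?posrE. Qed.

Lemma lnMp (a b : R) : 0 < a -> 0 < b -> ln (a * b) = ln a + ln b.
Proof. by move=> a0 b0; rewrite lnM ?posrE. Qed.

Lemma gibbs2 (a b : X -> Y -> R) : (forall x y, 0 <= a x y) -> (forall x y, 0 <= b x y) ->
  (forall x y, a x y != 0 -> b x y != 0) ->
  \sum_x \sum_y a x y - \sum_x \sum_y b x y <= \sum_x \sum_y rxl (a x y) (b x y).
Proof.
move=> a0 b0 ab; rewrite -sumrB; apply: ler_sum => x _; rewrite -sumrB.
apply: ler_sum => y _; exact: gibbs_term (a0 x y) (b0 x y) (ab x y).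
Qed.

Lemma gibbs1 (a b : X -> R) : (forall x, 0 <= a x) -> (forall x, 0 <= b x) ->
  (forall x, a x != 0 -> b x != 0) ->
  \sum_x a x - \sum_x b x <= \sum_x rxl (a x) (b x).
Proof.
move=> a0 b0 ab; rewrite -sumrB; apply: ler_sum => x _; exact: gibbs_term (a0 x) (b0 x) (ab x).
Qed.

Lemma margX_dist (q : X -> Y -> R) : is_joint q -> is_dist (margX q).
Proof.
case=> q0 q1; split => // x; rewrite /margX sumr_ge0 // => y _; exact: q0.
Qed.

Lemma B_le (q : X -> Y -> R) (r r0 : Y -> X -> R) : is_joint q -> is_rev_channel r ->
  (forall x y, q x y != 0 -> r y x != 0) ->
  (forall x y, margY q y != 0 -> r0 y x = q x y / margY q y) ->
  \sum_x \sum_y rql (q x y) (r y x) (margX q x) <=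
  \sum_x \sum_y rql (q x y) (r0 y x) (margX q x).
Proof.
move=> [q0 q1] hr hg hr0.
have key : \sum_x \sum_y rql (q x y) (r0 y x) (margX q x) -
           \sum_x \sum_y rql (q x y) (r y x) (margX q x) =
           \sum_x \sum_y rxl (q x y) (r y x * margY q y).
  rewrite -sumrB; apply: eq_bigr => x _; rewrite -sumrB; apply: eq_bigr => y _.
  rewrite /rql /rxl; case: eqP => [_|/eqP qn0]; first by rewrite subrr.
  have qp := neq0_pos (q0 x y) qn0.
  have rp : 0 < r y x by apply: neq0_pos; [case: (hr y) => + _; apply| exact: hg].
  have mp : 0 < margX q x by apply: lt_le_trans qp (marg_ge _ _ q0).
  have yp : 0 < margY q y by apply: lt_le_trans qp (margY_ge _ _ q0).
  rewrite hr0 ?gt_eqF // !lnDv ?divr_gt0 ?mulr_gt0 // lnMp //; ring.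
rewrite -subr_ge0 key; apply: le_trans (gibbs2 _ _ _); last first.
- move=> x y qn0; rewrite mulf_neq0 ?hg //.
  by rewrite gt_eqF // (lt_le_trans (neq0_pos (q0 x y) qn0)) // margY_ge.
- by move=> x y; rewrite mulr_ge0 //; [case: (hr y) => + _; apply|
    rewrite /margY sumr_ge0 // => i _; exact: q0].
- by [].
rewrite q1 subr_ge0 exchange_big /=.
rewrite (eq_bigr (fun y => margY q y)); last first.
  by move=> y _; rewrite -mulr_suml; case: (hr y) => _ ->; rewrite mul1r.
by rewrite /margY exchange_big /= q1.
Qed.

End H4.



Section H5.
Variables (R : realType) (X Y : finType).

Definition S2 (f : X -> Y -> R) := \sum_x \sum_y f x y.

Lemma S2D (f g : X -> Y -> R) : S2 (fun x y => f x y + g x y) = S2 f + S2 g.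
Proof. by rewrite /S2 -big_split; apply: eq_bigr => x _; rewrite big_split. Qed.

Lemma S2B (f g : X -> Y -> R) : S2 (fun x y => f x y - g x y) = S2 f - S2 g.
Proof. by rewrite /S2 -sumrB; apply: eq_bigr => x _; rewrite sumrB. Qed.

Lemma S2Z k (f : X -> Y -> R) : S2 (fun x y => k * f x y) = k * S2 f.
Proof. by rewrite /S2 mulr_sumr; apply: eq_bigr => x _; rewrite mulr_sumr. Qed.

Lemma sum2_lin (k : R) (f1 f2 f3 f4 f5 f6 : X -> Y -> R) :
 (forall x y, k * f1 x y + f2 x y + k * f3 x y = k * f4 x y - f5 x y + f6 x y) ->
 k * S2 f1 + S2 f2 + k * S2 f3 = k * S2 f4 - S2 f5 + S2 f6.
Proof.
move=> h.
transitivity (S2 (fun x y => k * f1 x y + f2 x y + k * f3 x y)).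
  by rewrite !S2D !S2Z.
transitivity (S2 (fun x y => k * f4 x y - f5 x y + f6 x y)).
  by congr S2; apply: funext => x; apply: funext => y; rewrite h.
by rewrite S2D S2B !S2Z.
Qed.

Lemma rxl_marg (a : Y -> R) (b : R) : (forall y, 0 <= a y) ->
  rxl (\sum_y a y) b = \sum_y (if a y == 0 then 0 else a y * ln ((\sum_y a y) / b)).
Proof.
move=> a0; rewrite /rxl; case: eqP => [s0|/eqP sn0].
  have h := psumr_eq0P (fun i _ => a0 i) s0.
  by rewrite big1 // => y _; rewrite h ?eqxx.
rewrite mulr_suml; apply: eq_bigr => y _; case: eqP => [->|//]; exact: mul0r.
Qed.

End H5.



Section H6.
Variables (R : realType) (X Y : finType) (alpha : R) (W : X -> Y -> R)
  (pX : X -> R) (r : Y -> X -> R).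
Hypotheses (halpha : 1 < alpha) (hW : is_channel W) (hp : is_dist pX)
  (hr : is_rev_channel r) (hZ : 0 < qhatX_den alpha W pX r).

Let gam := 1 - alpha^-1.
Let bet := alpha / (2 * alpha - 1).

Lemma alpha_gt0 : 0 < alpha. Proof. exact: lt_trans ltr01 halpha. Qed.

Lemma gam_neq0 : gam != 0.
Proof.
rewrite /gam subr_eq0 eq_sym invr_eq1 ?unitfE ?gt_eqF ?alpha_gt0 //.
Qed.

Lemma bet_neq0 : bet != 0.
Proof.
have a0 := alpha_gt0.
have b0 : 0 < 2 * alpha - 1 by rewrite subr_gt0 (lt_le_trans halpha) // ler_peMl ?ler1n // ltW ?alpha_gt0.
by rewrite /bet mulf_neq0 ?invr_eq0 ?gt_eqF.
Qed.

Lemma W0 x y : 0 <= W x y. Proof. by case: (hW x) => + _; apply. Qed.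
Lemma r0 x y : 0 <= r y x. Proof. by case: (hr y) => + _; apply. Qed.
Lemma p0 x : 0 <= pX x. Proof. by case: hp => + _; apply. Qed.

Lemma h0 x y : 0 <= W x y * r y x `^ gam.
Proof. by rewrite mulr_ge0 ?W0 ?powR_ge0. Qed.

Lemma g0 x : 0 <= gfun alpha W r x.
Proof. by rewrite /gfun sumr_ge0 // => y _; exact: h0. Qed.

Lemma g_ge x y : W x y * r y x `^ gam <= gfun alpha W r x.
Proof. by rewrite /gfun (bigD1 y) //= lerDl sumr_ge0 // => i _; exact: h0. Qed.

Lemma qhatYX0 x y : 0 <= qhatYX alpha W r x y.
Proof. by rewrite /qhatYX divr_ge0 ?h0 ?g0. Qed.

Lemma u0 x : 0 <= qhatX_num alpha W pX r x.
Proof. by rewrite /qhatX_num mulr_ge0 ?powR_ge0. Qed.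

Lemma qhatX0 x : 0 <= qhatX alpha W pX r x.
Proof. by rewrite /qhatX divr_ge0 ?u0 // ltW. Qed.

Lemma sum_qhatYX x : gfun alpha W r x != 0 -> \sum_y qhatYX alpha W r x y = 1.
Proof. by move=> gn0; rewrite /qhatYX -mulr_suml divff. Qed.

Lemma qhatX_g0 x : gfun alpha W r x = 0 -> qhatX alpha W pX r x = 0.
Proof.
by move=> g00; rewrite /qhatX /qhatX_num g00 powR0 ?bet_neq0 // mulr0 mul0r.
Qed.

Lemma margX_qstar x : margX (qstar alpha W pX r) x = qhatX alpha W pX r x.
Proof.
rewrite /margX /qstar -mulr_sumr.
have [g00|gn0] := eqVneq (gfun alpha W r x) 0; first by rewrite qhatX_g0 // mul0r.
by rewrite sum_qhatYX // mulr1.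
Qed.

Lemma sum_qhatX : \sum_x qhatX alpha W pX r x = 1.
Proof. by rewrite /qhatX -mulr_suml divff // gt_eqF. Qed.

Lemma qstar_joint : is_joint (qstar alpha W pX r).
Proof.
split; first by move=> x y; rewrite /qstar mulr_ge0 ?qhatX0 ?qhatYX0.
rewrite -sum_qhatX; apply: eq_bigr => x _; exact: margX_qstar.
Qed.

Lemma qstar_supp x y : qstar alpha W pX r x y != 0 -> W x y != 0 /\ r y x != 0.
Proof.
rewrite /qstar /qhatYX; have [->|Wn0] := eqVneq (W x y) 0.
  by rewrite !mul0r mulr0 eqxx.
have [->|rn0] := eqVneq (r y x) 0; last by [].
by rewrite powR0 ?gam_neq0 // mulr0 mul0r mulr0 eqxx.
Qed.

Lemma qstar_suppX x : margX (qstar alpha W pX r) x != 0 -> pX x != 0.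
Proof.
rewrite margX_qstar /qhatX /qhatX_num; have [->|//] := eqVneq (pX x) 0.
by rewrite powR0 ?bet_neq0 // !mul0r eqxx.
Qed.

End H6.



Lemma alg_id (R : realFieldType) (a Q lq lm lW lr lp lg lZ : R) : 1 < a ->
 a/(1-a) * (Q * (lq - (lm + lW))) + Q * (lr - lm) + a/(1-a) * (Q * (lm - lp)) =
 a/(1-a) * (Q * (lq - (a/(2*a-1) * lp + a/(2*a-1) * lg - lZ + (lW + (1 - a^-1) * lr - lg))))
 - Q * (lm - (a/(2*a-1)*lp + a/(2*a-1)*lg - lZ)) + Q * ((1 - a/(1-a)) * lZ).
Proof.
move=> h.
have h1 : 1 - a != 0 by rewrite lt_eqF //; lra.
have h2 : 2 * a - 1 != 0 by rewrite gt_eqF //; lra.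
have h3 : a != 0 by rewrite gt_eqF //; lra.
field; by rewrite ?h1 ?h2 ?h3.
Qed.

Lemma rxl_self (R : realType) (a : R) : rxl a a = 0.
Proof. by rewrite /rxl; case: eqP => // /eqP an0; rewrite divff // ln1 mulr0. Qed.

Section H7.
Variables (R : realType) (X Y : finType) (alpha : R) (W : X -> Y -> R)
  (pX : X -> R) (r : Y -> X -> R).
Hypotheses (halpha : 1 < alpha) (hW : is_channel W) (hp : is_dist pX)
  (hr : is_rev_channel r) (hZ : 0 < qhatX_den alpha W pX r).

Lemma term_id (q : X -> Y -> R) x y : (forall x y, 0 <= q x y) ->
  (forall x y, q x y != 0 -> W x y != 0) ->
  (forall x y, q x y != 0 -> r y x != 0) ->
  (forall x, margX q x != 0 -> pX x != 0) ->
  alpha / (1 - alpha) * rxl (q x y) (margX q x * W x y) + rql (q x y) (r y x) (margX q x)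
  + alpha / (1 - alpha) * (if q x y == 0 then 0 else q x y * ln (margX q x / pX x)) =
  alpha / (1 - alpha) * rxl (q x y) (qstar alpha W pX r x y)
  - (if q x y == 0 then 0 else q x y * ln (margX q x / qhatX alpha W pX r x))
  + q x y * ((1 - alpha / (1 - alpha)) * ln (qhatX_den alpha W pX r)).
Proof.
move=> q0 h1 h2 h3; rewrite /rxl /rql; case: eqP => [->|/eqP qn0].
  by rewrite !mulr0 mul0r !addr0 subr0.
have qp := neq0_pos (q0 x y) qn0.
have mp : 0 < margX q x by apply: lt_le_trans qp (marg_ge _ _ q0).
have Wp : 0 < W x y by apply: neq0_pos; [exact: W0 | exact: h1].
have rp : 0 < r y x by apply: neq0_pos; [exact: r0 | exact: h2].
have pp : 0 < pX x by apply: neq0_pos; [exact: p0 | apply: h3; rewrite gt_eqF].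
have hp' : 0 < W x y * r y x `^ (1 - alpha^-1) by rewrite mulr_gt0 ?powR_gt0.
have gp : 0 < gfun alpha W r x by apply: lt_le_trans hp' (g_ge _ _ _ _ _).
have up : 0 < qhatX_num alpha W pX r x by rewrite /qhatX_num mulr_gt0 ?powR_gt0.
have qhp : 0 < qhatX alpha W pX r x by rewrite /qhatX divr_gt0.
have qyp : 0 < qhatYX alpha W r x y by rewrite /qhatYX divr_gt0.
rewrite (lnDv qp (mulr_gt0 mp Wp)) (lnMp mp Wp) (lnDv rp mp) (lnDv mp pp).
rewrite /qstar (lnDv qp (mulr_gt0 qhp qyp)) (lnMp qhp qyp) (lnDv mp qhp).
rewrite /qhatX (lnDv up hZ) /qhatYX (lnDv hp' gp) (lnMp Wp (powR_gt0 _ rp)) ln_powR.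
rewrite /qhatX_num (lnMp (powR_gt0 _ pp) (powR_gt0 _ gp)) !ln_powR.
exact: alg_id.
Qed.


Definition good (q : X -> Y -> R) :=
  [/\ (forall x y, q x y != 0 -> W x y != 0),
  (forall x y, q x y != 0 -> r y x != 0) &
  (forall x, margX q x != 0 -> pX x != 0)].

Lemma keyF (q : X -> Y -> R) : is_joint q -> good q ->
  alpha / (1 - alpha) * (\sum_x \sum_y rxl (q x y) (margX q x * W x y))
     + (\sum_x \sum_y rql (q x y) (r y x) (margX q x))
     + alpha / (1 - alpha) * (\sum_x rxl (margX q x) (pX x)) =
  alpha / (1 - alpha) * (\sum_x \sum_y rxl (q x y) (qstar alpha W pX r x y))
  - \sum_x rxl (margX q x) (qhatX alpha W pX r x)
  + (1 - alpha / (1 - alpha)) * ln (qhatX_den alpha W pX r).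
Proof.
move=> [q0 q1] [h1 h2 h3].
set k := (1 - alpha / (1 - alpha)) * ln (qhatX_den alpha W pX r).
have e3 : \sum_x rxl (margX q x) (pX x) =
   S2 (fun x y => if q x y == 0 then 0 else q x y * ln (margX q x / pX x)).
  by rewrite /S2; apply: eq_bigr => x _; exact: (rxl_marg (pX x) (q0 x)).
have e5 : \sum_x rxl (margX q x) (qhatX alpha W pX r x) =
   S2 (fun x y => if q x y == 0 then 0 else q x y * ln (margX q x / qhatX alpha W pX r x)).
  by rewrite /S2; apply: eq_bigr => x _; exact: (rxl_marg _ (q0 x)).
have e6 : k = S2 (fun x y => q x y * k).
  transitivity (k * S2 q); first by rewrite [S2 q]q1 mulr1.
  rewrite -S2Z; congr S2; apply: funext => x; apply: funext => y; exact: mulrC.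
rewrite e3 e5 e6.
exact: (@sum2_lin _ _ _ (alpha / (1 - alpha)) (fun x y => rxl (q x y) (margX q x * W x y))
  (fun x y => rql (q x y) (r y x) (margX q x))
  (fun x y => if q x y == 0 then 0 else q x y * ln (margX q x / pX x))
  (fun x y => rxl (q x y) (qstar alpha W pX r x y))
  (fun x y => if q x y == 0 then 0 else q x y * ln (margX q x / qhatX alpha W pX r x))
  (fun x y => q x y * k)
  (fun x y => term_id x y q0 h1 h2 h3)).
Qed.

Lemma good_qstar_pos (q : X -> Y -> R) : is_joint q -> good q ->
  [/\ (forall x y, q x y != 0 -> qstar alpha W pX r x y != 0) &
  (forall x, margX q x != 0 -> qhatX alpha W pX r x != 0)].
Proof.
move=> [q0 q1] [h1 h2 h3].
have P : forall x y, q x y != 0 -> (0 < qhatX alpha W pX r x) && (0 < qhatYX alpha W r x y).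
  move=> x y qn0.
  have qp := neq0_pos (q0 x y) qn0.
  have Wp : 0 < W x y by apply: neq0_pos; [exact: W0 | exact: h1].
  have rp : 0 < r y x by apply: neq0_pos; [exact: r0 | exact: h2].
  have pp : 0 < pX x.
    apply: neq0_pos; [exact: p0 | apply: h3; rewrite gt_eqF //].
    by apply: lt_le_trans qp (marg_ge _ _ q0).
  have hp' : 0 < W x y * r y x `^ (1 - alpha^-1) by rewrite mulr_gt0 ?powR_gt0.
  have gp : 0 < gfun alpha W r x by apply: lt_le_trans hp' (g_ge _ _ _ _ _).
  have up : 0 < qhatX_num alpha W pX r x by rewrite /qhatX_num mulr_gt0 ?powR_gt0.
  by apply/andP; split; rewrite ?/qhatX ?/qhatYX divr_gt0.
split.
  move=> x y qn0; have /andP[a b] := P x y qn0; by rewrite /qstar gt_eqF // mulr_gt0.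
move=> x mn0.
have [[y qn0]|nq] := pselect (exists y, q x y != 0).
  by have /andP[a _] := P x y qn0; rewrite gt_eqF.
exfalso; move/negP: mn0; apply; apply/eqP; rewrite /margX big1 // => y _.
by have [//|qn0] := eqVneq (q x y) 0; exfalso; apply: nq; exists y.
Qed.

End H7.

End Helpers.
Import Helpers.

Theorem proposition6 (R : realType) (X Y : finType) (alpha : R)
    (halpha : 1 < alpha) (W : X -> Y -> R) (hW : is_channel W) :
  (* (1) optimal reverse channel *)
  (forall (pX : X -> R) (q : X -> Y -> R),
     is_dist pX -> is_joint q ->
     forall r0 : Y -> X -> R, is_rev_channel r0 ->
     (forall x y, margY q y != 0 -> r0 y x = q x y / margY q y) ->
     forall r : Y -> X -> R, is_rev_channel r ->
     (F_LP alpha W pX q r <= F_LP alpha W pX q r0)%E)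
  /\
  (* (2) optimal input distribution *)
  (forall (q : X -> Y -> R) (r : Y -> X -> R),
     is_joint q -> is_rev_channel r ->
     is_dist (margX q) /\
     forall pX : X -> R, is_dist pX ->
     (F_LP alpha W pX q r <= F_LP alpha W (margX q) q r)%E)
  /\
  (* (3) optimal joint distribution *)
  (forall (pX : X -> R) (r : Y -> X -> R),
     is_dist pX -> is_rev_channel r ->
     0 < qhatX_den alpha W pX r ->
     is_joint (qstar alpha W pX r) /\
     forall q : X -> Y -> R, is_joint q ->
     (F_LP alpha W pX q r <= F_LP alpha W pX (qstar alpha W pX r) r)%E).
Proof.
have cl0 := c_lt0 halpha.
split.
  move=> pX q hp hq r0 hr0 hr0def r hr.
  have q0 := hq.1.
  have g0 : forall x y, q x y != 0 -> r0 y x != 0.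
    move=> x y qn0; have qp := neq0_pos (q0 x y) qn0.
    have yp : 0 < margY q y by apply: lt_le_trans qp (margY_ge _ _ q0).
    by rewrite hr0def ?gt_eqF ?divr_gt0.
  have [h2|bad] := pselect (forall x y, q x y != 0 -> r y x != 0).
    rewrite /F_LP (T2_fin h2) (T2_fin g0).
    apply: leeD; last exact: lexx.
    apply: leeD; first exact: lexx.
    by rewrite lee_fin; apply: B_le.
  by rewrite (F_bad halpha q0) ?leNye // => -[_ [h2 _]].
split.
  move=> q r hq hr; split; first exact: margX_dist.
  move=> pX hp; rewrite /F_LP; apply: leeD2l.
  rewrite (@KL_fin _ _ (margX q) (margX q)) // (_ : \sum_t rxl _ _ = 0); last first.
    by rewrite big1 // => x _; rewrite rxl_self.
  have [h3|bad] := pselect (forall x, margX q x != 0 -> pX x != 0).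
    rewrite KL_fin // -EFinM lee_fin mulr0; apply: mulr_le0_ge0; first exact: ltW.
    have a0 : forall x, 0 <= margX q x by case: (margX_dist hq).
    have b0 : forall x, 0 <= pX x by case: hp.
    apply: le_trans (gibbs1 a0 b0 h3).
    by case: (margX_dist hq) => _ ->; case: hp => _ ->; rewrite subrr.
  move/existsNP: bad => [x] /not_implyP [qn0 /negP/negbNE/eqP p0].
  by rewrite (KL_inf qn0 p0) cmul_inf ?leNye.
move=> pX r hp hr hZ; split; first exact: qstar_joint.
move=> q hq.
have hqs := qstar_joint halpha hW hZ.
have gqs : good W pX r (qstar alpha W pX r).
  split; [by move=> x y /(qstar_supp halpha) [] | by move=> x y /(qstar_supp halpha) [] |].
  exact: (qstar_suppX halpha).
have [gq|bad] := pselect (good W pX r q); last first.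
  rewrite (F_bad halpha hq.1) ?leNye // => -[h1 [h2 h3]]; apply: bad; by split.
case: (gq) => h1 h2 h3; case: (gqs) => h1' h2' h3'.
rewrite (F_fin _ hq.1) // (F_fin _ hqs.1) // !(keyF halpha hW hp hr hZ) //.
rewrite (_ : \sum_x \sum_y rxl (qstar alpha W pX r x y) (qstar alpha W pX r x y) = 0); last first.
  by rewrite big1 // => x _; rewrite big1 // => y _; rewrite rxl_self.
rewrite (_ : \sum_x rxl (margX (qstar alpha W pX r) x) _ = 0); last first.
  by rewrite big1 // => x _; rewrite margX_qstar // rxl_self.
rewrite lee_fin mulr0 subr0 add0r.
have [ps1 ps2] := good_qstar_pos hW hp hr hZ hq gq.
have d1 : alpha / (1 - alpha) * \sum_x \sum_y rxl (q x y) (qstar alpha W pX r x y) <= 0.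
  apply: mulr_le0_ge0; first exact: ltW.
  apply: le_trans (gibbs2 hq.1 hqs.1 ps1).
  by case: hq => _ ->; case: hqs => _ ->; rewrite subrr.
have d2 : 0 <= \sum_x rxl (margX q x) (qhatX alpha W pX r x).
  have a0 : forall x, 0 <= margX q x by case: (margX_dist hq).
  apply: le_trans (gibbs1 a0 (qhatX0 hZ) ps2).
  by case: (margX_dist hq) => _ ->; rewrite sum_qhatX // subrr.
lra.
Qed.
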